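(* For every Scott-open subset $\mathcal U$ of $\mathcal Q\mathbb R_\ell$, the set $\{x\in\mathbb R:\{x\}\in\mathcal U\}$ is open in $\mathbb R_\ell$.
   Context: The Sorgenfrey line $\mathbb R_\ell$ is $\mathbb R$ with the topology generated by the half-open intervals $[a,b[$, $a<b$. $\mathcal Q\mathbb R_\ell$ is the set of non-empty compact subsets of $\mathbb R_\ell$ ordered by reverse inclusion $\supseteq$; it is a dcpo whose directed suprema are intersections, and it carries its Scott topology. *)

(* Defs.v *)
From Stdlib Require Import Reals List.
Open Scope R_scope.

Definition subset (A B : R -> Prop) : Prop := forall x, A x -> B x.

(* The Sorgenfrey line R_l: the topology generated by the base of half-open
   intervals [a,b[, a<b.  A set is open iff it is a union of such intervals,
   i.e. iff every point x of it has some [x,b[ (b > x) inside it. *)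
Definition sorg_open (U : R -> Prop) : Prop :=
  forall x, U x -> exists b, x < b /\ subset (fun y => x <= y /\ y < b) U.

Definition sorg_compact (K : R -> Prop) : Prop :=
  forall C : (R -> Prop) -> Prop,
    (forall U, C U -> sorg_open U) ->
    (forall x, K x -> exists U, C U /\ U x) ->
    exists l : list (R -> Prop),
      (forall U, In U l -> C U) /\
      (forall x, K x -> exists U, In U l /\ U x).

Definition QRl (K : R -> Prop) : Prop := (exists x, K x) /\ sorg_compact K.

Definition qle (K L : R -> Prop) : Prop := subset L K.

Definition q_directed (D : (R -> Prop) -> Prop) : Prop :=
  (forall K, D K -> QRl K) /\
  (exists K, D K) /\
  (forall K1 K2, D K1 -> D K2 ->
     exists K3, D K3 /\ qle K1 K3 /\ qle K2 K3).

Definition q_sup (D : (R -> Prop) -> Prop) (S : R -> Prop) : Prop :=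
  QRl S /\ (forall K, D K -> qle K S) /\
  (forall L, QRl L -> (forall K, D K -> qle K L) -> qle S L).

Definition scott_open (U : (R -> Prop) -> Prop) : Prop :=
  (forall K, U K -> QRl K) /\
  (forall K L, U K -> QRl L -> qle K L -> U L) /\
  (forall D S, q_directed D -> q_sup D S -> U S ->
     exists K, D K /\ U K).

(* Main.v *)
Require Import Defs.
From Stdlib Require Import Reals List.
From Stdlib Require Import Classical ClassicalEpsilon Lia Lra.
Open Scope R_scope.

Lemma arch1 (e : R) : 0 < e -> exists n : nat, / (INR n + 1) < e.
Proof.
  intros He. destruct (archimed_cor1 e He) as [N [HN HN0]].
  exists N. apply Rle_lt_trans with (/ INR N); auto.
  apply Rinv_le_contravar. apply lt_0_INR; auto. lra.
Qed.

Lemma inv_mono (n m : nat) : (n <= m)%nat -> / (INR m + 1) <= / (INR n + 1).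
Proof.
  intros H. apply Rinv_le_contravar.
  pose proof (pos_INR n); lra. apply le_INR in H; lra.
Qed.

Lemma singleton_QRl (a : R) : QRl (fun y => y = a).
Proof.
  split. exists a; auto.
  intros C HC Hcov. destruct (Hcov a eq_refl) as [V [HV Va]].
  exists (V :: nil). split.
  - intros W [<-|[]]; auto.
  - intros z ->. exists V; split; simpl; auto.
Qed.

Theorem lemma4p18 (U : (R -> Prop) -> Prop) :
  scott_open U ->
  sorg_open (fun x : R => U (fun y : R => y = x)).
Proof.
  intros [HQ [Hup Hsc]] x Hx.
  apply NNPP; intros Hno.
  assert (Hseq : forall n : nat, exists y, x <= y /\ y < x + / (INR n + 1) /\
                   ~ U (fun z => z = y)).
  { intros n. apply NNPP; intros Hn. apply Hno. exists (x + / (INR n + 1)).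
    split. pose proof (RinvN_pos n); lra.
    intros y [H1 H2]. apply NNPP; intros Hy. apply Hn. exists y; auto. }
  set (ys := fun n => proj1_sig (constructive_indefinite_description _ (Hseq n))).
  assert (Hys : forall n, x <= ys n /\ ys n < x + / (INR n + 1) /\
                   ~ U (fun z => z = ys n)).
  { intros n. unfold ys. destruct (constructive_indefinite_description _ (Hseq n)); auto. }
  assert (Hgt : forall n, x < ys n).
  { intros n. destruct (Hys n) as [h1 [_ h3]]. destruct h1 as [h1|h1]; auto.
    exfalso. apply h3. rewrite <- h1. exact Hx. }
  set (Kn := fun n : nat => fun z => z = x \/ exists m, (n <= m)%nat /\ z = ys m).
  assert (HK : forall n, QRl (Kn n)).
  { intros n. split. exists x; left; auto.
    intros C HC Hcov.
    destruct (Hcov x (or_introl eq_refl)) as [V0 [HV0 V0x]].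
    destruct (HC V0 HV0 x V0x) as [b [Hb Hsub]].
    destruct (arch1 (b - x)) as [N HN]. lra.
    assert (Hfin : forall k, exists l : list (R -> Prop),
      (forall U, In U l -> C U) /\
      (forall m, (n <= m)%nat -> (m < k)%nat -> exists U, In U l /\ U (ys m))).
    { induction k.
      - exists nil. split. intros ? []. intros; lia.
      - destruct IHk as [l [Hl1 Hl2]].
        destruct (Compare_dec.le_lt_dec n k) as [Hnk|Hnk].
        + destruct (Hcov (ys k) (or_intror (ex_intro _ k (conj Hnk eq_refl))))
            as [W [HW Wy]].
          exists (W :: l). split.
          * intros U0 [<-|HU0]; auto.
          * intros m H1 H2. destruct (Nat.eq_dec m k) as [->|Hmk].
            -- exists W; split; simpl; auto.
            -- destruct (Hl2 m H1 ltac:(lia)) as [U1 [? ?]]. exists U1; split; simpl; auto.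
        + exists l. split; auto. intros m H1 H2. apply Hl2; lia. }
    destruct (Hfin N) as [l [Hl1 Hl2]].
    exists (V0 :: l). split.
    - intros U0 [<-|HU0]; auto.
    - intros z [->|[m [Hm ->]]].
      + exists V0; split; simpl; auto.
      + destruct (Compare_dec.le_lt_dec N m) as [HNm|HNm].
        * exists V0; split; simpl; auto. apply Hsub.
          destruct (Hys m) as [h1 [h2 _]]. pose proof (inv_mono N m HNm). lra.
        * destruct (Hl2 m Hm HNm) as [U1 [? ?]]. exists U1; split; simpl; auto. }
  set (D := fun K => exists n, K = Kn n).
  assert (HD : q_directed D).
  { split; [|split].
    - intros K [n ->]; auto.
    - exists (Kn 0%nat); exists 0%nat; auto.
    - intros K1 K2 [n1 ->] [n2 ->]. exists (Kn (max n1 n2)). split.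
      exists (max n1 n2); auto.
      split; intros z [->|[m [Hm ->]]]; [left; reflexivity | right; exists m; split; [lia|reflexivity] | left; reflexivity | right; exists m; split; [lia|reflexivity]]. }
  assert (HS : q_sup D (fun y => y = x)).
  { split; [apply singleton_QRl|split].
    - intros K [n ->] z ->. left; auto.
    - intros L HL HDL z Lz. destruct (Req_dec z x) as [e|ne]; auto. exfalso.
      destruct (HDL (Kn 0%nat) (ex_intro _ 0%nat eq_refl) z Lz) as [e|[m0 [_ e0]]]; auto.
      assert (x < z) by (rewrite e0; apply Hgt).
      destruct (arch1 (z - x)) as [n Hn]. lra.
      destruct (HDL (Kn n) (ex_intro _ n eq_refl) z Lz) as [e|[m [Hm e]]]. lra.
      destruct (Hys m) as [_ [h2 _]]. pose proof (inv_mono n m Hm). lra. }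
  destruct (Hsc D _ HD HS Hx) as [K [[n ->] UK]].
  destruct (Hys n) as [_ [_ h3]]. apply h3.
  apply (Hup (Kn n)); auto. apply singleton_QRl.
  intros z ->. right. exists n; auto.
Qed.
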